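(* Let $d,k\ge 1$ be integers, let $\|\cdot\|$ be a norm on $\mathbb{R}^d$, let $\epsilon\ge 0$, and let $(X,Y)$ be a pair of random variables with values in $\mathbb{R}^d\times\mathbb{R}^k$. Let $\ell:\mathbb{R}^k\times\mathbb{R}^k\to\mathbb{R}_{\ge0}$ be a loss function and let $A,B:\mathbb{R}^k\times\mathbb{R}^k\to\mathbb{R}_{\ge 0}$ be functions with $A(u,u)=B(u,u)=0$ for all $u\in\mathbb{R}^k$ such that for all $u,v,u',v'\in\mathbb{R}^k$, $$\ell(u,v)+\ell(u',v')+A(u,u')\ge B(v,v')\quad\text{and}\quad \ell(u,v)+\ell(u',v')+A(v,v')\ge B(u,u').$$ Let $\mathcal{F}$ be a class of functions from $\mathbb{R}^d$ to $\mathbb{R}^k$. Then for every $f\in\mathcal{F}$, $$R(f)+R_\epsilon(f)\ge \max\left\{\mathbb{E}\left(\sup_{\Delta:\|\Delta\|\le\epsilon} B\big(f(X),f(X+\Delta)\big)\right),\ \mathbb{E}\,B(Y,Y')\right\},$$ where $Y'$ is a random variable such that, conditioned on $X$, $Y'$ is independent of $Y$ and has the same conditional distribution as $Y$ given $X$.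
   Context: The standard risk of $f$ is $R(f)=\mathbb{E}\,\ell(f(X),Y)$ and its adversarial risk is $R_\epsilon(f)=\mathbb{E}\left(\sup_{\Delta\in\mathbb{R}^d:\|\Delta\|\le\epsilon}\ell(f(X+\Delta),Y)\right)$. All expectations are assumed to be well defined (possibly $+\infty$). *)

(* Defs.v *)
From HB Require Import structures.
From mathcomp Require Import all_boot all_order all_algebra.
From mathcomp Require Import all_classical all_reals all_analysis.
From mathcomp Require Import matrix_topology measurable_realfun.

Set Implicit Arguments.
Unset Strict Implicit.
Unset Printing Implicit Defensive.

Import Order.TTheory GRing.Theory Num.Theory.
Import numFieldNormedType.Exports.
Local Open Scope classical_set_scope.
Local Open Scope ring_scope.

(* Borel sigma-algebra on R^n = 'rV[R]_n : the sigma-algebra generated by the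
   coordinate maps (equivalently, the product of the Borel sigma-algebras). *)
Definition rV_display : measure_display -> measure_display.
Proof. exact. Qed.

Section measurable_rV.
Variables (R : realType) (n : nat).

Definition rV_coord : 'I_n -> 'rV[R]_n -> R := fun i x => x ord0 i.

Let rV_set0 : g_sigma_preimage rV_coord set0.
Proof. rewrite /g_sigma_preimage; exact: (@sigma_algebra0 _ setT _). Qed.

Let rV_setC A : g_sigma_preimage rV_coord A -> g_sigma_preimage rV_coord (~` A).
Proof.
rewrite /g_sigma_preimage.
have [_ hC _] := @smallest_sigma_algebra _ setT
  (\big[setU/set0]_(i < n) preimage_set_system setT (rV_coord i) measurable).
by move=> /hC; rewrite setTD.
Qed.

Let rV_bigcup (F : _^nat) : (forall i, g_sigma_preimage rV_coord (F i)) ->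
  g_sigma_preimage rV_coord (\bigcup_i (F i)).
Proof. rewrite /g_sigma_preimage; move=> H; exact: (@sigma_algebra_bigcup _ setT _ _ H). Qed.

HB.instance Definition _ := @isMeasurable.Build (rV_display default_measure_display)
  'rV[R]_n (g_sigma_preimage rV_coord) rV_set0 rV_setC rV_bigcup.

End measurable_rV.

Definition is_norm (R : realType) (n : nat) (N : 'rV[R]_n -> R) : Prop :=
  [/\ forall x, 0 <= N x,
      forall x, N x = 0 -> x = 0,
      forall (a : R) x, N (a *: x) = `|a| * N x
    & forall x y, N (x + y) <= N x + N y].

Local Open Scope ereal_scope.

Definition risk (R : realType) (d0 : measure_display) (Omega : measurableType d0)
  (P : probability Omega R) (d k : nat)
  (loss : 'rV[R]_k -> 'rV[R]_k -> R) (f : 'rV[R]_d -> 'rV[R]_k)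
  (X : Omega -> 'rV[R]_d) (Y : Omega -> 'rV[R]_k) : \bar R :=
  \int[P]_w (loss (f (X w)) (Y w))%:E.

Definition adv_risk (R : realType) (d0 : measure_display) (Omega : measurableType d0)
  (P : probability Omega R) (d k : nat) (N : 'rV[R]_d -> R) (eps : R)
  (loss : 'rV[R]_k -> 'rV[R]_k -> R) (f : 'rV[R]_d -> 'rV[R]_k)
  (X : Omega -> 'rV[R]_d) (Y : Omega -> 'rV[R]_k) : \bar R :=
  \int[P]_w ereal_sup [set (loss (f (X w + D)) (Y w))%:E | D in [set D | (N D <= eps)%R]].

(* Main.v *)
Require Import Defs.
From HB Require Import structures.
From mathcomp Require Import all_boot all_order all_algebra.
From mathcomp Require Import all_classical all_reals all_analysis.
From mathcomp Require Import matrix_topology measurable_realfun.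

Import Order.TTheory GRing.Theory Num.Theory.
Import numFieldNormedType.Exports.
Local Open Scope classical_set_scope.
Local Open Scope ring_scope.
Local Open Scope ereal_scope.

Lemma law_eq (R : realType) (d k : nat) (d0 : measure_display) (Omega : measurableType d0) (P : probability Omega R)
  (X : Omega -> 'rV[R]_d) (Y Y' : Omega -> 'rV[R]_k) (mX : measurable_fun setT X) (mY : measurable_fun setT Y)
  (mY' : measurable_fun setT Y')
  (hY' : exists kappa : R.-pker 'rV[R]_d ~> 'rV[R]_k,
     forall (Ad : set 'rV[R]_d) (C C' : set 'rV[R]_k),
       measurable Ad -> measurable C -> measurable C' ->
       P (X @^-1` Ad `&` Y @^-1` C `&` Y' @^-1` C')
       = \int[P]_(w in X @^-1` Ad) (kappa (X w) C * kappa (X w) C'))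
  (E : set ('rV[R]_d * 'rV[R]_k)) : measurable E ->
  P ((fun w => (X w, Y w)) @^-1` E) = P ((fun w => (X w, Y' w)) @^-1` E).
Proof.
move=> mE.
have mZ1 : measurable_fun setT (fun w => (X w, Y w)) by exact: measurable_fun_pair.
have mZ2 : measurable_fun setT (fun w => (X w, Y' w)) by exact: measurable_fun_pair.
set G := [set A `*` B | A in @measurable _ 'rV[R]_d & B in @measurable _ 'rV[R]_k].
have := @measure_unique _ R _ G (fun _ => setT) _ _ _ _
  (pushforward P (fun w => (X w, Y w))) (pushforward P (fun w => (X w, Y' w))).
apply.
- exact: measurable_prod_measurableType.
- move=> U V [X1 mX1 [X2 mX2 <-{U}]] [Y1 mY1 [Y2 mY2 <-{V}]].
  exists (X1 `&` Y1); first exact: measurableI.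
  by exists (X2 `&` Y2); [exact: measurableI|rewrite setXI].
- by move=> _; exists setT => //; exists setT => //; rewrite setXTT.
- by rewrite bigcup_const.
- move=> _ [A mA [C mC <-]]; rewrite /pushforward.
  have [kappa hk] := hY'.
  transitivity (P (X @^-1` A `&` Y @^-1` C `&` Y' @^-1` setT)).
    by congr (P _); rewrite preimage_setT setIT.
  transitivity (P (X @^-1` A `&` Y @^-1` setT `&` Y' @^-1` C)); last first.
    by congr (P _); rewrite preimage_setT setIT.
  rewrite !hk //; apply: eq_integral => w _.
  by rewrite !prob_kernel mule1 mul1e.
- by move=> _; change (P setT < +oo); rewrite probability_setT ltry.
- exact: mE.
Qed.

Lemma int_eq (R : realType) (d k : nat) (d0 : measure_display) (Omega : measurableType d0) (P : probability Omega R)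
  (X : Omega -> 'rV[R]_d) (Y Y' : Omega -> 'rV[R]_k) (mX : measurable_fun setT X) (mY : measurable_fun setT Y)
  (mY' : measurable_fun setT Y')
  (hE : forall E : set ('rV[R]_d * 'rV[R]_k), measurable E ->
  P ((fun w => (X w, Y w)) @^-1` E) = P ((fun w => (X w, Y' w)) @^-1` E))
  (g : 'rV[R]_d * 'rV[R]_k -> \bar R) (mg : measurable_fun setT g) (g0 : forall p, 0 <= g p) :
  \int[P]_w g (X w, Y w) = \int[P]_w g (X w, Y' w).
Proof.
have mZ1 : measurable_fun setT (fun w => (X w, Y w)) by exact: measurable_fun_pair.
have mZ2 : measurable_fun setT (fun w => (X w, Y' w)) by exact: measurable_fun_pair.
have h1 := @ge0_integral_pushforward _ _ _ _ R _ mZ1 P setT g measurableT mg (fun p _ => g0 p).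
have h2 := @ge0_integral_pushforward _ _ _ _ R _ mZ2 P setT g measurableT mg (fun p _ => g0 p).
rewrite preimage_setT in h1 h2.
rewrite -h1 -h2.
apply: eq_measure_integral => A mA _.
exact: hE.
Qed.

Theorem theorem1 (R : realType) (d k : nat) (hd : (0 < d)%N) (hk : (0 < k)%N)
  (N : 'rV[R]_d -> R) (hN : is_norm N) (eps : R) (heps : (0 <= eps)%R)
  (d0 : measure_display) (Omega : measurableType d0) (P : probability Omega R)
  (X : Omega -> 'rV[R]_d) (Y Y' : Omega -> 'rV[R]_k)
  (mX : measurable_fun setT X) (mY : measurable_fun setT Y)
  (mY' : measurable_fun setT Y')
  (* Y' : conditionally on X, independent of Y with the same conditional law:
     there is a probability kernel kappa (the conditional law of Y given X)
     such that the conditional joint law of (Y, Y') given X is kappa (x) kappa. *)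
  (hY' : exists kappa : R.-pker 'rV[R]_d ~> 'rV[R]_k,
     forall (Ad : set 'rV[R]_d) (C C' : set 'rV[R]_k),
       measurable Ad -> measurable C -> measurable C' ->
       P (X @^-1` Ad `&` Y @^-1` C `&` Y' @^-1` C')
       = \int[P]_(w in X @^-1` Ad) (kappa (X w) C * kappa (X w) C'))
  (loss : 'rV[R]_k -> 'rV[R]_k -> R)
  (loss_ge0 : forall u v, (0 <= loss u v)%R)
  (mloss : measurable_fun setT (fun p : 'rV[R]_k * 'rV[R]_k => loss p.1 p.2))
  (A B : 'rV[R]_k -> 'rV[R]_k -> R)
  (A_ge0 : forall u v, (0 <= A u v)%R) (B_ge0 : forall u v, (0 <= B u v)%R)
  (A_diag : forall u, A u u = 0%R) (B_diag : forall u, B u u = 0%R)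
  (hAB1 : forall u v u' v', (loss u v + loss u' v' + A u u' >= B v v')%R)
  (hAB2 : forall u v u' v', (loss u v + loss u' v' + A v v' >= B u u')%R)
  (F : set ('rV[R]_d -> 'rV[R]_k))
  (* expectations well defined: the integrands are measurable *)
  (mB : measurable_fun setT (fun w => B (Y w) (Y' w)))
  (f : 'rV[R]_d -> 'rV[R]_k) (hf : F f) (mf : measurable_fun setT f)
  (madv : measurable_fun setT (fun w : Omega =>
     ereal_sup [set (loss (f (X w + D)) (Y w))%:E | D in [set D | (N D <= eps)%R]]
     : \bar R))
  (mBsup : measurable_fun setT (fun w : Omega =>
     ereal_sup [set (B (f (X w)) (f (X w + D)))%:E | D in [set D | (N D <= eps)%R]]
     : \bar R)) :
  risk P loss f X Y + adv_risk P N eps loss f X Y >=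
  maxe (\int[P]_w ereal_sup
          [set (B (f (X w)) (f (X w + D)))%:E | D in [set D | (N D <= eps)%R]])
       (\int[P]_w (B (Y w) (Y' w))%:E).
Proof.
have N0 : N 0%R = 0%R.
  case: hN => _ _ hs _; have := hs 0%R (0%R : 'rV[R]_d); rewrite scale0r normr0 mul0r; exact.
set L := fun w => (loss (f (X w)) (Y w))%:E.
set S := fun w => ereal_sup [set (loss (f (X w + D)) (Y w))%:E | D in [set D | (N D <= eps)%R]].
set SB := fun w => ereal_sup [set (B (f (X w)) (f (X w + D)))%:E | D in [set D | (N D <= eps)%R]].
have mg : measurable_fun setT (fun p : 'rV[R]_d * 'rV[R]_k => (loss (f p.1) p.2)%:E).
  apply/measurable_EFinP.
  exact: (measurableT_comp mloss (measurable_fun_pair (measurableT_comp mf measurable_fst) measurable_snd)).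
have mL : measurable_fun setT L.
  apply/measurable_EFinP.
  exact: (measurableT_comp mloss (measurable_fun_pair (measurableT_comp mf mX) mY)).
have L0 w : 0 <= L w by rewrite lee_fin.
have LS w : L w <= S w.
  apply: ereal_sup_ubound; exists 0%R; first by rewrite /= N0 heps.
  by rewrite addr0.
have S0 w : 0 <= S w by apply: le_trans (LS w).
rewrite /risk /adv_risk -/L -/S.
rewrite ge_max; apply/andP; split.
  rewrite -(ge0_integralD P measurableT (fun w _ => L0 w) mL (fun w _ => S0 w) madv).
  apply: ge0_le_integral => //.
  - move=> w _; apply: (@le_trans _ _ (B (f (X w)) (f (X w + 0%R)))%:E); first by rewrite lee_fin.
    by apply: ereal_sup_ubound; exists 0%R => //; rewrite /= N0 heps.
  - by apply: emeasurable_funD.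
  move=> w _; apply: ge_ereal_sup => _ [D hD <-].
  apply: le_trans (_ : (loss (f (X w)) (Y w) + loss (f (X w + D)%R) (Y w))%R%:E <= _).
    rewrite lee_fin; have := hAB2 (f (X w)) (Y w) (f (X w + D)%R) (Y w).
    by rewrite A_diag addr0.
  rewrite EFinD leeD2l //.
  by apply: ereal_sup_ubound; exists D.
have hE := @law_eq R d k d0 Omega P X Y Y' mX mY mY' hY'.
have g0 : forall p : 'rV[R]_d * 'rV[R]_k, 0 <= (loss (f p.1) p.2)%:E by move=> p; rewrite lee_fin.
have Leq := @int_eq R d k d0 Omega P X Y Y' mX mY mY' hE _ mg g0.
apply: (@le_trans _ _ (\int[P]_w (L w + (loss (f (X w)) (Y' w))%:E)%E)).
  apply: ge0_le_integral => //.
  - by move=> w _; rewrite lee_fin.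
  - by apply/measurable_EFinP.
  - apply: emeasurable_funD => //; exact: (measurableT_comp mg (measurable_fun_pair mX mY')).
  move=> w _; rewrite -EFinD lee_fin.
  have := hAB1 (f (X w)) (Y w) (f (X w)) (Y' w); by rewrite A_diag addr0.
rewrite ge0_integralD //; last first.
  - exact: (measurableT_comp mg (measurable_fun_pair mX mY')).
  - by move=> w _; rewrite lee_fin.
rewrite -Leq leeD2l //.
apply: ge0_le_integral => //.
by move=> w _; exact: LS.

Qed.
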